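(* Let $n>2$, $1<k<n$, $G=H_B(n,k)$. For $h\ge 1$ let $d^{(h)}$ be the number of unordered pairs $\{u,v\}$ of vertices of $G$ with $d(u,v)=h$; let $d^{(2)}_{V_1}$ be the number of unordered pairs of vertices of $V_1$ at distance $2$, and $d^{(2)}_{V_2}$, $d^{(4)}_{V_2}$ the numbers of unordered pairs of vertices of $V_2$ at distance $2$ and $4$ respectively. Then (1) $d^{(1)}=\binom{n}{k}\left(\frac{3^k-3}{2}+2^{k-1}(3^{n-k}-1)\right)$; (2) $d^{(3)}=\binom{n}{k}\left(\frac{3^n-1}{2}-\binom{n}{k}-\frac{3^k-3}{2}-2^{k-1}(3^{n-k}-1)\right)$; (3) $d^{(2)}_{V_1}=\binom{\binom{n}{k}}{2}$; (4) $d^{(2)}_{V_2}+d^{(4)}_{V_2}=\binom{\frac{3^n-1}{2}-\binom{n}{k}}{2}$.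
   Context: Fix integers $n\ge 2$ and $1\le k<n$ and positive real numbers $x_1<x_2<\dots<x_n$. Let $\mathscr{B}_n=\{\pm x_1,\pm x_2,\dots,\pm x_{n-1},x_n\}$ (so $-x_n\notin\mathscr{B}_n$). Let $\phi(\mathscr{B}_n)$ be the family of all nonempty subsets $S\subseteq\mathscr{B}_n$ whose elements have pairwise distinct absolute values and whose element of largest absolute value is positive. Let $\mathscr{B}_n^+=\{x_1,\dots,x_n\}$, let $V_1$ be the set of all $k$-element subsets of $\mathscr{B}_n^+$, and let $V_2=\phi(\mathscr{B}_n)\setminus V_1$. For $A\in\phi(\mathscr{B}_n)$ put $A^\dagger=\{|a|:a\in A\}$. The bipartite Kneser B type-$k$ graph $H_B(n,k)$ is the simple graph with vertex set $V_1\cup V_2$ in which $X\in V_1$ and $Y\in V_2$ are adjacent if and only if $X\subseteq Y^\dagger$ or $Y^\dagger\subseteq X$, and there are no other edges. $d(u,v)$ denotes graph distance. *)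

(* Defs.v *)
From mathcomp Require Import all_boot all_algebra.
Unset Printing Implicit Defensive.

(* Encoding: the element  +x_i  (resp. -x_i) of {+-x_1,...,+-x_n} is the pair
   (i, false) (resp. (i, true)) with i : 'I_n (index i stands for x_{i+1}).
   Since 0 < x_1 < ... < x_n, |(+-x_i)| compares as the index i. *)
Notation elt n := ('I_n * bool)%type.

Section HB.
Variables n k : nat.

Definition inB (p : elt n) : bool := ~~ (p.2 && (p.1.+1 == n)).

Definition phiB (S : {set elt n}) : bool :=
  [&& S != set0,
      [forall p in S, inB p],
      [forall p in S, forall q in S, (p.1 == q.1) ==> (p == q)] &
      [forall p in S, [forall q in S, q.1 <= p.1] ==> ~~ p.2]].

Definition Bplus : {set elt n} := [set p | ~~ p.2].

Definition V1 (S : {set elt n}) : bool := (S \subset Bplus) && (#|S| == k).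
Definition V2 (S : {set elt n}) : bool := phiB S && ~~ V1 S.
Definition vertex (S : {set elt n}) : bool := V1 S || V2 S.

Definition dag (S : {set elt n}) : {set elt n} := [set (p.1, false) | p in S].

Definition adj1 (X Y : {set elt n}) : bool :=
  [&& V1 X, V2 Y & (X \subset dag Y) || (dag Y \subset X)].

Definition adj (X Y : {set elt n}) : bool := adj1 X Y || adj1 Y X.

Fixpoint walk (h : nat) (X Y : {set elt n}) : bool :=
  match h with
  | 0 => vertex X && (X == Y)
  | h'.+1 => vertex X && [exists Z, adj X Z && walk h' Z Y]
  end.

Definition dist_is (h : nat) (X Y : {set elt n}) : bool :=
  walk h X Y && [forall m : 'I_h, ~~ walk m X Y].

Definition npairs (P : pred {set elt n}) (h : nat) : nat :=
  #|[set U : {set {set elt n}} |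
      [exists X, exists Y,
        [&& X != Y, U == [set X; Y], P X, P Y & dist_is h X Y]]]|.

End HB.

(* Main.v *)
Require Import Defs.
From mathcomp Require Import all_boot all_algebra.
From mathcomp Require Import zify ring lra.
Require Import Defs.
Import GRing.Theory Num.Theory.
Set Implicit Arguments.
Unset Strict Implicit.

Lemma fam_prod (aT : finType) (F : aT -> pred (option bool)) :
  #|[set f : {ffun aT -> option bool} | [forall x, f x \in F x]]| = \prod_x #|F x|.
Proof.
have -> : #|[set f : {ffun aT -> option bool} | [forall x, f x \in F x]]| = #|family F|.
  apply: eq_card => f; rewrite inE; apply/forallP/familyP => H x; exact: H.
rewrite card_family.
rewrite /image_mem foldr_map -big_enum /=.
rewrite enumT; elim: (Finite.enum aT) => [|x s IH]; rewrite ?big_nil ?big_cons //= IH ?cardE.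
congr (_ * _); exact: eq_bigl.
Qed.

Lemma cardopt (a b : bool) : #|[pred o : option bool | if o is Some _ then a else b]| = b + 2 * a.
Proof. rewrite cardE /enum_mem -enumT /=. rewrite enumT unlock /=.
by case: a; case: b; rewrite ?unlock. Qed.

Section Main.
Variables n k : nat.
Notation T := (elt n).

Definition distinct (S : {set T}) :=
  [forall p in S, forall q in S, (p.1 == q.1) ==> (p == q)].
Definition maxpos (S : {set T}) :=
  [forall p in S, [forall q in S, q.1 <= p.1] ==> ~~ p.2].
Definition has (S : {set T}) (i : 'I_n) := [exists p in S, p.1 == i].

Lemma distinctP (S : {set T}) : reflect (forall p q, p \in S -> q \in S -> p.1 = q.1 -> p = q) (distinct S).
Proof.
apply: (iffP forallP) => H.
  move=> p q pS qS e; move/forall_inP: (implyP (H p) pS) => /(_ q qS) /implyP.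
  by rewrite e eqxx => /(_ isT) /eqP.
move=> p; apply/implyP => pS; apply/forall_inP => q qS; apply/implyP => /eqP e.
by rewrite (H p q).
Qed.

Lemma hasP (S : {set T}) i : reflect (exists2 p, p \in S & p.1 = i) (has S i).
Proof. apply: (iffP exists_inP) => [[p pS /eqP e]|[p pS e]]; exists p => //; exact/eqP. Qed.

Lemma phiBE (S : {set T}) : phiB n S = [&& S != set0, distinct S & maxpos S].
Proof.
rewrite /phiB -/(distinct S) -/(maxpos S).
case: (S != set0) => //=; case dS: (distinct S) => //=; case mS: (maxpos S); rewrite ?andbF ?andbT //.
apply/forall_inP => p pS; rewrite /inB; apply/negP => /andP [p2 /eqP pn].
move/forall_inP: mS => /(_ p pS) /implyP; rewrite p2 => H.
suff /H : [forall q in S, q.1 <= p.1] by [].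
apply/forall_inP => q _; rewrite -ltnS pn; exact: ltn_ord.
Qed.

Definition enc (f : {ffun 'I_n -> option bool}) : {set T} := [set p | f p.1 == Some p.2].

Lemma enc_inj : injective enc.
Proof.
move=> f g E; apply/ffunP => i.
case Ef: (f i) => [b|]; case Eg: (g i) => [c|] //.
- have : (i, b) \in enc f by rewrite inE Ef.
  by rewrite E inE Eg /= => /eqP [->].
- have : (i, b) \in enc f by rewrite inE Ef.
  by rewrite E inE Eg.
- have : (i, c) \in enc g by rewrite inE Eg.
  by rewrite -E inE Ef.
Qed.

Lemma enc_distinct f : distinct (enc f).
Proof.
apply/distinctP => [[i b] [j c]]; rewrite !inE /= => /eqP e1 /eqP e2 e; subst j.
by move: e1; rewrite e2 => [[->]].
Qed.

Lemma enc_has f i : has (enc f) i = (f i != None).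
Proof.
apply/hasP/idP => [[p]|]; first by rewrite inE => /eqP e <-; rewrite e.
case e: (f i) => [b|] // _; exists (i, b) => //; by rewrite inE e.
Qed.

Definition dec (S : {set T}) : {ffun 'I_n -> option bool} :=
  [ffun i => if [pick p in S | p.1 == i] is Some p then Some p.2 else None].

Lemma decK (S : {set T}) : distinct S -> enc (dec S) = S.
Proof.
move/distinctP=> dS; apply/setP => p; rewrite inE ffunE.
case: pickP => [q /andP [qS /eqP e]|H].
  apply/eqP/idP => [[e2]|pS]; last by rewrite (dS p q).
  suff -> : p = q by []. by case: p q e e2 {qS} => [? ?] [? ?] /= -> ->.
apply/esym/negbTE/negP => pS; move: (H p); by rewrite pS eqxx.
Qed.

Definition cond (a b : 'I_n -> bool) (S : {set T}) :=
  [forall i, if has S i then a i else b i].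

Lemma count_cond a b :
  #|[set S | distinct S & cond a b S]| = \prod_i (b i + 2 * a i).
Proof.
pose P x := [pred o : option bool | if o is Some _ then a x else b x].
rewrite -(eq_bigr _ (fun i _ => cardopt (a i) (b i))) -fam_prod.
rewrite -(card_imset _ enc_inj); apply: eq_card => S; rewrite !inE.
apply/andP/imsetP => [[dS cS]|[f]].
  exists (dec S); last by rewrite (@decK S dS).
  rewrite inE; apply/forallP => i; move/forallP: cS => /(_ i).
  by rewrite -{1}(@decK S dS) enc_has /= ; case: (dec S i).
rewrite inE => /forallP fP ->; split; first exact: enc_distinct.
apply/forallP => i; rewrite enc_has; move: (fP i); by case: (f i).
Qed.


Lemma prod_if (I : {set 'I_n}) x y :
  \prod_(i : 'I_n) (if i \in I then x else y) = x ^ #|I| * y ^ (n - #|I|).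
Proof.
rewrite (bigID (mem I)) /=.
rewrite (eq_bigr (fun _ => x)); last by move=> i ->.
rewrite [X in _ * X](eq_bigr (fun _ => y)); last by move=> i Hi; rewrite (negbTE Hi).
rewrite !prod_nat_const; congr (_ * _ ^ _).
apply: (@addnI #|I|); rewrite subnKC; last by apply: leq_trans (max_card _) _; rewrite card_ord.
have H := cardC (mem I); apply: etrans (etrans H _); last by rewrite card_ord.
congr (_ + _); exact: eq_card.
Qed.

Definition ismax (S : {set T}) p := (p \in S) && [forall q in S, q.1 <= p.1].
Definition flipS (S : {set T}) :=
  if [pick p | ismax S p] is Some p then (S :\ p) :|: [set (p.1, ~~ p.2)] else S.

Lemma max_exists (S : {set T}) : S != set0 -> exists p, ismax S p.
Proof.
case/set0Pn => p0 p0S.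
case: (@arg_maxnP _ p0 (mem S) (fun p : T => val p.1) p0S) => p pS H.
exists p; apply/andP; split => //; apply/forall_inP => q qS; exact: H.
Qed.

Lemma max_uniq (S : {set T}) p q : distinct S -> ismax S p -> ismax S q -> p = q.
Proof.
move=> /distinctP dS /andP [pS /forall_inP Hp] /andP [qS /forall_inP Hq].
apply: dS => //; apply/val_inj/eqP; rewrite eqn_leq Hp ?Hq //.
Qed.

Lemma flipS_eq (S : {set T}) p : distinct S -> ismax S p ->
  flipS S = (S :\ p) :|: [set (p.1, ~~ p.2)].
Proof.
move=> dS mp; rewrite /flipS; case: pickP => [q mq|H].
  by rewrite (max_uniq dS mq mp).
by move: (H p); rewrite mp.
Qed.

Lemma flip_props (S : {set T}) p : distinct S -> ismax S p ->
  [/\ distinct (flipS S), ismax (flipS S) (p.1, ~~ p.2),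
      forall i, has (flipS S) i = has S i & flipS (flipS S) = S].
Proof.
move=> dS mp; have E := flipS_eq dS mp.
move: (mp) => /andP [pS /forall_inP Hp].
have p'S : (p.1, ~~ p.2) \notin S.
  apply/negP => H; have := (distinctP _ dS) _ _ H pS erefl.
  by case: p {Hp pS H mp E} => ? []  [].
have dF : distinct (flipS S).
  apply/distinctP => r s; rewrite E !inE.
  case/orP => [/andP [rp rS]|/eqP ->]; case/orP => [/andP [sp sS]|/eqP ->] //= e.
  - exact: (distinctP _ dS).
  - by move/negP: rp; case; apply/eqP/(distinctP _ dS).
  - by move/negP: sp; case; apply/eqP/(distinctP _ dS).
have mF : ismax (flipS S) (p.1, ~~ p.2).
  rewrite /ismax E !inE eqxx orbT /=; apply/forall_inP => q; rewrite !inE.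
  by case/orP => [/andP [_ /Hp]|/eqP ->].
split => //.
  move=> i; apply/hasP/hasP => [[r]|[r rS <-]].
    rewrite E !inE => /orP [/andP [_ rS] <-|/eqP -> <-]; [by exists r | by exists p].
  case: (eqVneq r p) => [->|rp]; first by exists (p.1, ~~ p.2); rewrite // E !inE eqxx orbT.
  by exists r; rewrite // E !inE rp rS.
rewrite (flipS_eq dF mF) E /= negbK; apply/setP => r; rewrite !inE.
have pe : (p.1, p.2) = p by case: p {Hp pS p'S mp E mF}.
rewrite pe; case: (eqVneq r p) => [->|rp] /=; first by rewrite pS orbT.
case: (eqVneq r (p.1, ~~ p.2)) => [->|_] /=; first by rewrite (negbTE p'S).
by rewrite !orbF.
Qed.

Lemma maxposE (S : {set T}) p : distinct S -> ismax S p -> maxpos S = ~~ p.2.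
Proof.
move=> dS mp; apply/forall_inP/idP => [H|np q qS].
  by move: mp => /andP [pS mq]; move/implyP: (H p pS); apply.
apply/implyP => mq; have mq' : ismax S q by rewrite /ismax qS.
by rewrite (max_uniq dS mq' mp).
Qed.

Lemma flip_all (S : {set T}) : S != set0 -> distinct S ->
  [/\ flipS S != set0, distinct (flipS S), forall i, has (flipS S) i = has S i,
      flipS (flipS S) = S & maxpos (flipS S) = ~~ maxpos S].
Proof.
move=> nS dS; case: (max_exists nS) => p mp.
case: (flip_props dS mp) => dF mF hF fF; split => //.
  by apply/set0Pn; exists (p.1, ~~ p.2); case/andP: mF.
by rewrite (maxposE dF mF) (maxposE dS mp).
Qed.

Lemma half (C : {set {set T}}) :
  (forall S, S \in C -> (S != set0) && distinct S) ->
  (forall S, S \in C -> flipS S \in C) ->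
  #|C| = 2 * #|[set S in C | maxpos S]|.
Proof.
move=> HC HF.
have inj : {in C &, injective flipS}.
  move=> S1 S2 /HC /andP [n1 d1] /HC /andP [n2 d2] e.
  by case: (flip_all n1 d1) => _ _ _ <- _; case: (flip_all n2 d2) => _ _ _ <- _; rewrite e.
pose Cp := [set S in C | maxpos S]; pose Cn := [set S in C | ~~ maxpos S].
have le (b : bool) : #|[set S in C | maxpos S == b]| <= #|[set S in C | maxpos S == ~~ b]|.
  rewrite -(card_in_imset (f := flipS)); last by move=> ? ? /setIdP [? _] /setIdP [? _]; apply: inj.
  apply: subset_leq_card; apply/subsetP => _ /imsetP [S /setIdP [SC /eqP mS] ->].
  case/andP: (HC _ SC) => nS dS; rewrite inE HF //=.
  by case: (flip_all nS dS) => _ _ _ _ ->; rewrite mS.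
have e1 : #|[set S in C | maxpos S == true]| = #|[set S in C | maxpos S == false]|.
  by apply/eqP; rewrite eqn_leq le (le false).
rewrite -(cardsID [set S | maxpos S] C) mul2n -addnn; congr (_ + _).
  by apply: eq_card => S; rewrite !inE andbC.
transitivity #|[set S in C | maxpos S == false]|.
  by apply: eq_card => S; rewrite !inE andbC; case: (maxpos S).
by rewrite -e1; apply: eq_card => S; rewrite !inE; case: (maxpos S).
Qed.

Lemma count_phi a b :
  2 * #|[set S | phiB n S & cond a b S]| + [forall i, b i] = \prod_i (b i + 2 * a i).
Proof.
rewrite -count_cond [in RHS](cardsD1 set0) addnC; congr (_ + _).
  rewrite inE; congr (nat_of_bool _).
  have -> : distinct set0 by apply/distinctP => p q; rewrite inE.
  by apply/forallP/forallP => H i; move: (H i); rewrite (_ : has set0 i = false) //; apply/hasP => [[?]]; rewrite inE.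
rewrite [in RHS]half.
- congr (2 * _); apply: eq_card => S; rewrite !inE phiBE.
  by case: (S != set0); case: (distinct S); case: (cond a b S); case: (maxpos S).
- by move=> S; rewrite !inE => /andP [-> /andP [->]].
move=> S; rewrite !inE => /andP [nS /andP [dS cS]].
case: (flip_all nS dS) => -> -> hF _ _ /=.
by apply/forallP => i; rewrite hF; move/forallP: cS.
Qed.


Lemma dag_in (Y : {set T}) q : (q \in dag n Y) = ~~ q.2 && has Y q.1.
Proof.
apply/imsetP/andP => [[p pY ->]|[q2 /hasP [p pY e]]]; first by split => //; apply/hasP; exists p.
exists p => //; by case: q q2 e => ? [] //= _ ->.
Qed.

Lemma pos_has (X : {set T}) i : X \subset Bplus n -> has X i = ((i, false) \in X).
Proof.
move/subsetP=> XB; apply/hasP/idP => [[p pX e]|]; last by exists (i, false).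
have := XB p pX; rewrite inE; by case: p pX e => ? [] //= pX <-.
Qed.

Lemma dag_pos (Y : {set T}) : Y \subset Bplus n -> dag n Y = Y.
Proof.
move=> YB; apply/setP => q; rewrite dag_in pos_has //.
case: q => i [] /=; last by [].
by apply/esym/negP => /(subsetP YB); rewrite inE.
Qed.

Lemma card_Bplus : #|Bplus n| = n.
Proof.
have inj : injective (fun i : 'I_n => (i, false)) by move=> i j [].
rewrite -[RHS](card_ord n) -(card_imset _ inj); apply: eq_card => q.
rewrite inE; apply/idP/imsetP => [|[i _ ->]] //.
by case: q => i [] //= _; exists i.
Qed.

Lemma V1_phi (X : {set T}) : (0 < k)%N -> V1 n k X -> phiB n X.
Proof.
move=> k0 /andP [XB /eqP cX]; rewrite phiBE; apply/and3P; split.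
- by rewrite -card_gt0 cX.
- apply/distinctP => p q pX qX e; move: (subsetP XB p pX) (subsetP XB q qX); rewrite !inE.
  by case: p q {pX qX} e => ? [] [? []] //= ->.
- apply/forall_inP => p pX; apply/implyP => _; have := subsetP XB p pX; by rewrite inE.
Qed.

Section Deg.
Variable X : {set T}.
Hypothesis k0 : (0 < k)%N.
Hypothesis V1X : V1 n k X.

Let I := [set i | has X i].
Let XB : X \subset Bplus n. Proof. by case/andP: V1X. Qed.

Lemma card_I : #|I| = k.
Proof.
have inj : injective (fun i : 'I_n => (i, false)) by move=> i j [].
case/andP: V1X => _ /eqP <-; rewrite -(card_imset _ inj); apply: eq_card => q.
apply/imsetP/idP => [[i]|qX]; first by rewrite inE pos_has // => ? ->.
exists q.1; first by rewrite inE; apply/hasP; exists q.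
have := subsetP XB q qX; rewrite inE; by case: q {qX} => ? [].
Qed.

Definition asup := fun _ : 'I_n => true.
Definition bsup := fun i : 'I_n => i \notin I.
Definition asub := fun i : 'I_n => i \in I.
Definition bsub := fun _ : 'I_n => true.

Lemma sub_dag (Y : {set T}) : (X \subset dag n Y) = cond asup bsup Y.
Proof.
apply/subsetP/forallP => [H i|H q qX].
  rewrite /asup /bsup; case hY: (has Y i) => //=; apply/negP; rewrite inE pos_has // => /H.
  by rewrite dag_in hY andbF.
have q2 : ~~ q.2 by have := subsetP XB q qX; rewrite inE.
rewrite dag_in q2 /=; move: (H q.1); rewrite /asup /bsup inE; case: (has Y q.1) => //=.
by rewrite pos_has //; case: q q2 qX => ? [] //= _ ->.
Qed.

Lemma dag_sub (Y : {set T}) : (dag n Y \subset X) = cond asub bsub Y.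
Proof.
apply/subsetP/forallP => [H i|H q].
  rewrite /asub /bsub; case hY: (has Y i) => //=; rewrite inE pos_has //; apply: H.
  by rewrite dag_in hY.
rewrite dag_in => /andP [q2 hY]; move: (H q.1); rewrite /asub /bsub hY inE pos_has //.
by case: q q2 {hY} => ? [].
Qed.

Let Psup := [set Y | phiB n Y & cond asup bsup Y].
Let Psub := [set Y | phiB n Y & cond asub bsub Y].

Lemma cnt_sup : 2 * #|Psup| = 2 ^ k * 3 ^ (n - k).
Proof.
have := count_phi asup bsup.
have -> : [forall i, bsup i] = false.
  have : (0 < #|I|)%N by rewrite card_I.
  case/card_gt0P => i iI; apply/negbTE/negP => /forallP /(_ i); by rewrite /bsup iI.
rewrite addn0 => ->; rewrite -card_I -prod_if; apply: eq_bigr => i _.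
by rewrite /asup /bsup; case: (i \in I).
Qed.

Lemma cnt_sub : 2 * #|Psub| + 1 = 3 ^ k.
Proof.
have := count_phi asub bsub.
have -> : [forall i, bsub i] = true by apply/forallP.
have P := prod_if I 3 1; rewrite exp1n muln1 in P.
move=> ->; rewrite -card_I -P.
apply: eq_bigr => i _; by rewrite /asub /bsub; case: (i \in I).
Qed.

Lemma cnt_eq : 2 * #|Psup :&: Psub| = 2 ^ k.
Proof.
have := count_phi asub bsup.
have -> : [forall i, bsup i] = false.
  have : (0 < #|I|)%N by rewrite card_I.
  case/card_gt0P => i iI; apply/negbTE/negP => /forallP /(_ i); by rewrite /bsup iI.
rewrite addn0 => E.
have -> : Psup :&: Psub = [set Y | phiB n Y & cond asub bsup Y].
  apply/setP => Y; rewrite !inE; case: (phiB n Y) => //=.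
  apply/andP/forallP => [[/forallP H1 /forallP H2] i|H].
    move: (H1 i) (H2 i); rewrite /asup /bsup /asub /bsub; by case: (has Y i).
  split; apply/forallP => i; move: (H i); rewrite /asup /bsup /asub /bsub; by case: (has Y i).
have P := prod_if I 2 1; rewrite exp1n muln1 in P.
rewrite E -card_I -P.
apply: eq_bigr => i _; by rewrite /asub /bsup; case: (i \in I).
Qed.

Lemma adj_set : [set Y | adj1 n k X Y] = (Psup :|: Psub) :\ X.
Proof.
apply/setP => Y; rewrite !inE /adj1 V1X /= sub_dag dag_sub /V2.
case: (eqVneq Y X) => [->|nYX] /=; first by rewrite /V2 V1X andbF.
case pY: (phiB n Y) => //=.
case C: (cond asup bsup Y || cond asub bsub Y); rewrite ?andbF ?andbT //=.
apply/negP => /andP [YB /eqP cY]; move: C; rewrite -sub_dag -dag_sub dag_pos //.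
case/andP: V1X => _ /eqP cX.
case/orP => S; apply: (negP nYX).
- by rewrite eq_sym eqEcard S cX cY leqnn.
- by rewrite eqEcard S cX cY leqnn.
Qed.

Lemma deg_eq : 2 * #|[set Y | adj1 n k X Y]| + 3 + 2 ^ k = 3 ^ k + 2 ^ k * 3 ^ (n - k).
Proof.
have XU : X \in Psup :|: Psub.
  by rewrite !inE V1_phi //= -sub_dag dag_pos // subxx.
have E1 := cardsD1 X (Psup :|: Psub); rewrite XU -adj_set in E1.
have E2 := cardsUI Psup Psub.
have := cnt_sup; have := cnt_sub; have := cnt_eq. lia.
Qed.

End Deg.

Lemma card_V1 : #|[set X | V1 n k X]| = 'C(n, k).
Proof. transitivity 'C(#|Bplus n|, k); last by rewrite card_Bplus.
rewrite -cards_draws; apply: eq_card => X; by rewrite !inE. Qed.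

Lemma card_phi : 2 * #|[set Y | phiB n Y]| + 1 = 3 ^ n.
Proof.
have := count_phi (fun _ => true) (fun _ => true).
have -> : [forall i : 'I_n, true] = true by apply/forallP.
rewrite (eq_bigr (fun _ => 3)) // prod_nat_const card_ord => <-.
congr (2 * _ + _); apply: eq_card => Y; rewrite !inE.
by case: (phiB n Y) => //=; apply/esym/forallP => i; case: (has Y i).
Qed.

Lemma card_V2 : (0 < k)%N -> #|[set Y | V2 n k Y]| + 'C(n, k) = #|[set Y | phiB n Y]|.
Proof.
move=> k0; rewrite -card_V1 -(cardsID [set X | V1 n k X] [set Y | phiB n Y]) addnC.
congr (_ + _); apply: eq_card => Y; rewrite !inE /V2.
  by apply/idP/andP => [H|[]] //; split => //; exact: V1_phi.
by rewrite andbC.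
Qed.

Lemma V2_notV1 (S : {set T}) : V2 n k S -> V1 n k S = false.
Proof. by case/andP => _ /negbTE. Qed.

Lemma adj_V (X Y : {set T}) : adj n k X Y -> (V1 n k X && V2 n k Y) || (V2 n k X && V1 n k Y).
Proof. by case/orP => /and3P [-> -> _]; rewrite ?orbT. Qed.

Lemma V_vertex (S : {set T}) : V1 n k S || V2 n k S -> vertex n k S.
Proof. by []. Qed.

Lemma adj_vertex (X Y : {set T}) : adj n k X Y -> vertex n k X && vertex n k Y.
Proof. by case/adj_V/orP => /andP [H1 H2]; rewrite /vertex H1 H2 ?orbT. Qed.

Lemma adj_par (X Y : {set T}) : adj n k X Y -> V1 n k X = ~~ V1 n k Y.
Proof. by case/adj_V/orP => /andP [H1 H2]; [rewrite H1 (V2_notV1 H2) | rewrite (V2_notV1 H1) H2]. Qed.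

Lemma adjC (X Y : {set T}) : adj n k X Y = adj n k Y X.
Proof. by rewrite /adj orbC. Qed.

Lemma walk_vertex h (X Y : {set T}) : walk n k h X Y -> vertex n k X && vertex n k Y.
Proof.
elim: h X => [|h IH] X /=; first by case/andP => vX /eqP <-; rewrite vX.
by case/andP => vX /existsP [Z /andP [_ /IH /andP [_ ->]]]; rewrite vX.
Qed.

Lemma walk1 (X Y : {set T}) : walk n k 1 X Y = adj n k X Y.
Proof.
apply/idP/idP => /=.
  by case/andP => _ /existsP [Z /and3P [aXZ _ /eqP <-]].
move=> a; case/andP: (adj_vertex a) => -> vY; apply/existsP; exists Y; by rewrite a vY eqxx.
Qed.

Lemma walk_cat a b (X Z Y : {set T}) : walk n k a X Z -> walk n k b Z Y -> walk n k (a + b) X Y.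
Proof.
elim: a X => [|a IH] X /=; first by case/andP => _ /eqP ->.
case/andP => vX /existsP [W /andP [aXW wWZ]] wZY; rewrite vX /=.
apply/existsP; exists W; rewrite aXW /=; exact: IH wWZ wZY.
Qed.

Lemma walk_sym h (X Y : {set T}) : walk n k h X Y -> walk n k h Y X.
Proof.
elim: h X => [|h IH] X.
  by move=> /= /andP [vX /eqP <-]; rewrite vX eqxx.
case/andP => vX /existsP [Z /andP [aXZ wZY]].
rewrite -addn1; apply: walk_cat (IH _ wZY) _; by rewrite walk1 adjC.
Qed.

Lemma walk_par h (X Y : {set T}) : walk n k h X Y -> V1 n k X = V1 n k Y (+) odd h.
Proof.
elim: h X => [|h IH] X /=; first by case/andP => _ /eqP ->; rewrite addbF.
case/andP => _ /existsP [Z /andP [aXZ /IH E]].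
rewrite (adj_par aXZ) E; by case: (V1 n k Y); case: (odd h).
Qed.

Lemma distP h (X Y : {set T}) :
  reflect (walk n k h X Y /\ forall m, (m < h)%N -> ~~ walk n k m X Y) (dist_is n k h X Y).
Proof.
apply: (iffP andP) => [[w /forallP H]|[w H]]; split => //.
  by move=> m mh; exact: (H (Ordinal mh)).
by apply/forallP => m; apply: H.
Qed.

Lemma dist_sym h (X Y : {set T}) : dist_is n k h X Y -> dist_is n k h Y X.
Proof.
case/distP => w H; apply/distP; split; first exact: walk_sym.
move=> m mh; apply/negP => /walk_sym; exact/negP/H.
Qed.

Lemma dist_uniq h h' (X Y : {set T}) : dist_is n k h X Y -> dist_is n k h' X Y -> h = h'.
Proof.
move=> /distP [w H] /distP [w' H']; case: (ltngtP h h') => // lt.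
  by move/negP: (H' _ lt).
by move/negP: (H _ lt).
Qed.

Lemma pair_eq (X Y X' Y' : {set T}) : X != Y -> [set X; Y] = [set X'; Y'] ->
  (X' = X /\ Y' = Y) \/ (X' = Y /\ Y' = X).
Proof.
move=> nXY E.
have hX' : X' \in [set X; Y] by rewrite E set21.
have hY' : Y' \in [set X; Y] by rewrite E set22.
have hX : X \in [set X'; Y'] by rewrite -E set21.
have hY : Y \in [set X'; Y'] by rewrite -E set22.
move: hX' hY' hX hY; rewrite !inE.
case/orP => /eqP ->; case/orP => /eqP -> //; rewrite ?orbb.
- by move=> _ /eqP e; rewrite e eqxx in nXY.
- by auto.
- by auto.
- by move=> /eqP e; rewrite e eqxx in nXY.
Qed.


Section Top.
Hypothesis k0 : (0 < k)%N.
Hypothesis kn : (k < n)%N.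

Lemma pos_phi (S : {set T}) : S \subset Bplus n -> S != set0 -> phiB n S.
Proof.
move=> SB nS; rewrite phiBE nS /=; apply/andP; split.
- apply/distinctP => p q pX qX e; move: (subsetP SB p pX) (subsetP SB q qX); rewrite !inE.
  by case: p q {pX qX} e => ? [] [? []] //= ->.
- apply/forall_inP => p pX; apply/implyP => _; have := subsetP SB p pX; by rewrite inE.
Qed.

Lemma V2_top : V2 n k (Bplus n).
Proof.
rewrite /V2 pos_phi //; last by rewrite -card_gt0 card_Bplus (leq_ltn_trans _ kn).
by rewrite /V1 card_Bplus subxx /= neq_ltn kn orbT.
Qed.

Lemma adj_top (X : {set T}) : V1 n k X -> adj n k X (Bplus n).
Proof.
move=> V1X; apply/orP; left; rewrite /adj1 V1X V2_top /= dag_pos ?subxx //.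
by case/andP: V1X => ->.
Qed.

Lemma draw (B : {set T}) m : (m <= #|B|)%N -> exists A : {set T}, A \subset B /\ #|A| = m.
Proof.
move=> mB; have : (0 < #|[set A : {set T} | A \subset B & #|A| == m]|)%N by rewrite cards_draws bin_gt0.
by case/card_gt0P => A; rewrite inE => /andP [AB /eqP cA]; exists A.
Qed.

Lemma exists_nb (Y : {set T}) : V2 n k Y -> exists X, V1 n k X && adj n k X Y.
Proof.
move=> V2Y; set D := dag n Y.
have DB : D \subset Bplus n by apply/subsetP => q; rewrite dag_in inE => /andP [].
case: (leqP k #|D|) => kD.
  case: (draw kD) => A [AD cA]; exists A.
  have V1A : V1 n k A by rewrite /V1 (subset_trans AD DB) cA eqxx.
  by rewrite V1A /adj /adj1 V1A V2Y AD.
have : (k - #|D| <= #|Bplus n :\: D|)%N.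
  rewrite cardsD (setIidPr DB) card_Bplus leq_sub2r //; exact: ltnW.
case/draw => W [WB cW].
have dDW : D :&: W = set0.
  apply/setP => q; rewrite !inE; apply/negP => /andP [qD /(subsetP WB)].
  by rewrite inE qD.
have XB : D :|: W \subset Bplus n.
  by rewrite subUset DB (subset_trans WB) // subsetDl.
exists (D :|: W).
have V1X : V1 n k (D :|: W).
  rewrite /V1 XB /=; have := cardsUI D W; rewrite dDW cards0 addn0 cW => ->.
  by rewrite subnKC // ltnW.
by rewrite V1X /adj /adj1 V1X V2Y subsetUl orbT.
Qed.

Lemma walk_adj (X Y : {set T}) : adj n k X Y -> walk n k 1 X Y.
Proof. by rewrite walk1. Qed.

Lemma d1 (X Y : {set T}) : V1 n k X -> V2 n k Y -> dist_is n k 1 X Y = adj1 n k X Y.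
Proof.
move=> V1X V2Y; apply/distP/idP => [[]|a].
  by rewrite walk1 /adj /adj1 (V2_notV1 V2Y) /= orbF.
split; first by rewrite walk1 /adj a.
case=> // _; apply/negP => /= /andP [_ /eqP e]; by rewrite e (V2_notV1 V2Y) in V1X.
Qed.

Lemma d3 (X Y : {set T}) : V1 n k X -> V2 n k Y -> dist_is n k 3 X Y = ~~ adj1 n k X Y.
Proof.
move=> V1X V2Y; apply/distP/idP => [[_ H]|na].
  apply/negP => a; move/negP: (H 1%N isT); apply; by rewrite walk1 /adj a.
split.
  case: (exists_nb V2Y) => X' /andP [V1X' aX'Y].
  have w1 := walk_adj (adj_top V1X).
  have w2 := walk_sym (walk_adj (adj_top V1X')).
  exact: (walk_cat (walk_cat w1 w2) (walk_adj aX'Y)).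
case=> [|[|[|m]]] // _; apply/negP.
- move=> /= /andP [_ /eqP e]; by rewrite e (V2_notV1 V2Y) in V1X.
- by rewrite walk1 /adj (negbTE na) /adj1 (V2_notV1 V2Y).
- by move/walk_par; rewrite /= addbF V1X (V2_notV1 V2Y).
Qed.

Lemma dV1 (X X' : {set T}) : V1 n k X -> V1 n k X' -> X != X' -> dist_is n k 2 X X'.
Proof.
move=> V1X V1X' nX; apply/distP; split.
  exact: (walk_cat (walk_adj (adj_top V1X)) (walk_sym (walk_adj (adj_top V1X')))).
case=> [|[|m]] // _; apply/negP.
- by move=> /= /andP [_ /eqP e]; rewrite e eqxx in nX.
- by move/walk_par; rewrite /= V1X V1X'.
Qed.

Lemma dV2 (Y Y' : {set T}) : V2 n k Y -> V2 n k Y' -> Y != Y' ->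
  dist_is n k 2 Y Y' || dist_is n k 4 Y Y'.
Proof.
move=> V2Y V2Y' nY.
have n0 : forall m, (m < 2)%N -> ~~ walk n k m Y Y'.
  case=> [|[|m]] // _; apply/negP.
  - by move=> /= /andP [_ /eqP e]; rewrite e eqxx in nY.
  - by move/walk_par; rewrite /= (V2_notV1 V2Y) (V2_notV1 V2Y').
case w2: (walk n k 2 Y Y').
  by apply/orP; left; apply/distP; split.
apply/orP; right; apply/distP; split.
  case: (exists_nb V2Y) => X /andP [V1X aXY].
  case: (exists_nb V2Y') => X' /andP [V1X' aX'Y'].
  have w1 := walk_sym (walk_adj aXY).
  have w3 := walk_cat (walk_adj (adj_top V1X)) (walk_sym (walk_adj (adj_top V1X'))).
  exact: (walk_cat (walk_cat w1 w3) (walk_adj aX'Y')).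
case=> [|[|[|[|m]]]] // _; try by apply: n0.
- by rewrite w2.
- by apply/negP; move/walk_par; rewrite /= (V2_notV1 V2Y) (V2_notV1 V2Y').
Qed.

End Top.


Lemma np_all (P : pred {set T}) h :
  (forall X Y, X != Y -> P X -> P Y -> dist_is n k h X Y) ->
  npairs n k P h = 'C(#|[set X | P X]|, 2).
Proof.
move=> H; rewrite /npairs -cards_draws; apply: eq_card => U; rewrite !inE.
apply/existsP/andP => [[X /existsP [Y /and5P [nXY /eqP -> PX PY _]]]|[sU /cards2P [X [Y [nXY EU]]]]].
  split; last by rewrite cards2 nXY.
  by apply/subsetP => Z; rewrite !inE => /orP [] /eqP ->.
have PX : P X by have := subsetP sU X; rewrite EU !inE eqxx => /(_ isT).
have PY : P Y by have := subsetP sU Y; rewrite EU !inE eqxx orbT => /(_ isT).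
exists X; apply/existsP; exists Y; by rewrite nXY EU eqxx PX PY H.
Qed.

Lemma np_24 (P : pred {set T}) :
  (forall X Y, X != Y -> P X -> P Y -> dist_is n k 2 X Y || dist_is n k 4 X Y) ->
  npairs n k P 2 + npairs n k P 4 = 'C(#|[set X | P X]|, 2).
Proof.
move=> H; rewrite /npairs -cards_draws.
set A2 := [set U : {set {set T}} | [exists X, exists Y, [&& X != Y, U == [set X; Y], P X, P Y & dist_is n k 2 X Y]]].
set A4 := [set U : {set {set T}} | [exists X, exists Y, [&& X != Y, U == [set X; Y], P X, P Y & dist_is n k 4 X Y]]].
rewrite -cardsUI.
have -> : A2 :&: A4 = set0.
  apply/setP => U; rewrite !inE; apply/negP.
  case/andP => /existsP [X /existsP [Y /and5P [nXY /eqP -> _ _ d2]]].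
  case/existsP => X' /existsP [Y' /and5P [_ /eqP E _ _ d4]].
  case: (pair_eq nXY E) => [[e1 e2]|[e1 e2]]; subst X' Y'.
    by have := dist_uniq d2 d4.
  by have := dist_uniq d2 (dist_sym d4).
rewrite cards0 addn0; apply: eq_card => U; rewrite !inE.
apply/orP/andP => [[]|[sU /cards2P [X [Y [nXY EU]]]]].
- case/existsP => [X /existsP [Y /and5P [nXY /eqP -> PX PY _]]].
  split; last by rewrite cards2 nXY.
  by apply/subsetP => Z; rewrite !inE => /orP [] /eqP ->.
- case/existsP => [X /existsP [Y /and5P [nXY /eqP -> PX PY _]]].
  split; last by rewrite cards2 nXY.
  by apply/subsetP => Z; rewrite !inE => /orP [] /eqP ->.
have PX : P X by have := subsetP sU X; rewrite EU !inE eqxx => /(_ isT).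
have PY : P Y by have := subsetP sU Y; rewrite EU !inE eqxx orbT => /(_ isT).
case/orP: (H X Y nXY PX PY) => d; [left|right];
  apply/existsP; exists X; apply/existsP; exists Y; by rewrite nXY EU eqxx PX PY d.
Qed.

Lemma np_bip h : odd h ->
  npairs n k (vertex n k) h =
  \sum_(X in [set X | V1 n k X]) #|[set Y | V2 n k Y & dist_is n k h X Y]|.
Proof.
move=> oh.
pose Pr := [set XY : {set T} * {set T} | [&& V1 n k XY.1, V2 n k XY.2 & dist_is n k h XY.1 XY.2]].
have inj : {in Pr &, injective (fun XY => [set XY.1; XY.2])}.
  move=> [X Y] [X' Y']; rewrite !inE /= => /and3P [V1X V2Y _] /and3P [V1X' V2Y' _] E.
  have nXY : X != Y by apply/eqP => e; rewrite e (V2_notV1 V2Y) in V1X.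
  case: (pair_eq nXY E) => [[-> ->]|[e1 e2]] //.
  by rewrite e1 (V2_notV1 V2Y) in V1X'.
transitivity #|Pr|.
  rewrite /npairs -(card_in_imset inj); apply: eq_card => U; rewrite !inE.
  apply/existsP/imsetP => [[X /existsP [Y /and5P [nXY /eqP -> vX vY d]]]|[[X Y]]].
    case/distP: (d) => w _; have := walk_par w; rewrite oh addbT.
    case/orP: vX => [V1X|V2X]; case/orP: vY => [V1Y|V2Y].
    - by rewrite V1X V1Y.
    - by move=> _; exists (X, Y) => //; rewrite inE V1X V2Y d.
    - by move=> _; exists (Y, X); rewrite ?inE /= ?V1Y ?V2X ?(dist_sym d) // setUC.
    - by rewrite (V2_notV1 V2X) (V2_notV1 V2Y).
  rewrite inE /= => /and3P [V1X V2Y d] ->.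
  have nXY : X != Y by apply/eqP => e; rewrite e (V2_notV1 V2Y) in V1X.
  exists X; apply/existsP; exists Y; by rewrite nXY eqxx /vertex V1X V2Y orbT d.
rewrite -sum1_card (eq_bigl (fun p => V1 n k p.1 && (V2 n k p.2 && dist_is n k h p.1 p.2))); last first.
  by move=> p; rewrite !inE.
rewrite -(pair_big_dep (fun X => V1 n k X) (fun X Y => V2 n k Y && dist_is n k h X Y) (fun _ _ => 1%N)) /=.
apply: eq_big => [X|X _]; first by rewrite inE.
by rewrite sum1_card; apply: eq_card => Y; rewrite inE.
Qed.

End Main.

Local Open Scope ring_scope.
Theorem mainTheorem15 (n k : nat) (hn : (2 < n)%N) (hk1 : (1 < k)%N) (hkn : (k < n)%N) :
  [/\ (npairs n k (vertex n k) 1)%:R =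
        ('C(n, k))%:R * ((3 ^+ k - 3) / 2 + 2 ^+ k.-1 * (3 ^+ (n - k) - 1))
        :> rat,
      (npairs n k (vertex n k) 3)%:R =
        ('C(n, k))%:R * ((3 ^+ n - 1) / 2 - ('C(n, k))%:R - (3 ^+ k - 3) / 2
                         - 2 ^+ k.-1 * (3 ^+ (n - k) - 1)) :> rat,
      (npairs n k (V1 n k) 2 = 'C('C(n, k), 2))%N &
      (npairs n k (V2 n k) 2 + npairs n k (V2 n k) 4
        = 'C((3 ^ n - 1) %/ 2 - 'C(n, k), 2))%N].
Proof.
have k0 : (0 < k)%N by apply: ltnW.
have degR : forall X : {set elt n}, V1 n k X ->
    (#|[set Y | adj1 n k X Y]|)%:R = (3 ^+ k - 3) / 2 + 2 ^+ k.-1 * (3 ^+ (n - k) - 1) :> rat.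
  move=> X V1X; have := deg_eq k0 V1X.
  move/(congr1 (fun m : nat => m%:R : rat)); rewrite !natrD !natrM !natrX.
  case: k k0 hk1 hkn {V1X} => // k' _ _ _ /=.
  rewrite exprS => E.
  set d := (#|_|)%:R in E *; set p := 2 ^+ k' in E *; set c := 3 ^+ (n - k'.+1) in E *.
  set t := 3 ^+ k'.+1 in E *.
  have -> : d = (t + 2 * p * c - 3 - 2 * p) / 2 by rewrite -E; field.
  by field.
have phiR : (#|[set Y | phiB n Y]|)%:R = (3 ^+ n - 1) / 2 :> rat.
  have := card_phi n; move/(congr1 (fun m : nat => m%:R : rat)).
  rewrite natrD natrM natrX => <-; by field.
have V2N := card_V2 n k0.
have inner3 : forall X : {set elt n}, V1 n k X ->
    (#|[set Y | V2 n k Y & dist_is n k 3 X Y]| + #|[set Y | adj1 n k X Y]|)%N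
      = #|[set Y | V2 n k Y]|.
  move=> X V1X; rewrite -(cardsID [set Y | adj1 n k X Y] [set Y | V2 n k Y]) addnC.
  congr (_ + _); apply: eq_card => Y; rewrite !inE.
    by apply/idP/andP => [a|[]] //; split => //; case/and3P: a.
  by case V2Y: (V2 n k Y); rewrite ?andbF //= (d3 hkn V1X V2Y) andbT.
split.
- rewrite np_bip // natr_sum.
  rewrite (eq_bigr (fun _ => (3 ^+ k - 3) / 2 + 2 ^+ k.-1 * (3 ^+ (n - k) - 1))); last first.
    move=> X; rewrite inE => V1X; rewrite -(degR X V1X); congr (_%:R); apply: eq_card => Y.
    rewrite !inE; case V2Y: (V2 n k Y); rewrite ?andbF /= ?(d1 V1X V2Y) //; by apply/esym/negbTE/negP => /and3P [_ H _]; rewrite H in V2Y.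
  by rewrite sumr_const card_V1 mulr_natl.
- rewrite np_bip // natr_sum.
  rewrite (eq_bigr (fun _ => (3 ^+ n - 1) / 2 - ('C(n, k))%:R - (3 ^+ k - 3) / 2
                         - 2 ^+ k.-1 * (3 ^+ (n - k) - 1))); last first.
    move=> X; rewrite inE => V1X.
    have := inner3 X V1X; move/(congr1 (fun m : nat => m%:R : rat)).
    rewrite natrD degR // => E.
    have := congr1 (fun m : nat => m%:R : rat) V2N; rewrite natrD -phiR => E2.
    set a := (#|_|)%:R in E *.
    have -> : a = (#|[set Y | V2 n k Y]|)%:R - ((3 ^+ k - 3) / 2 + 2 ^+ k.-1 * (3 ^+ (n - k) - 1)).
      by rewrite -E addrK.
    rewrite -E2; set v := (#|_|)%:R; set cc := ('C(n,k))%:R; lra.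
  by rewrite sumr_const card_V1 mulr_natl.
- rewrite np_all; first by rewrite card_V1.
  move=> X Y nXY V1X V1Y; exact: (dV1 hkn V1X V1Y nXY).
- rewrite np_24; last by move=> X Y nXY V2X V2Y; exact: (dV2 hkn V2X V2Y nXY).
  congr 'C(_, 2); have P := card_phi n.
  have -> : ((3 ^ n - 1) %/ 2 = #|[set Y | phiB n Y]|)%N.
    by rewrite -P addnK mulKn.
  by rewrite -V2N addnK.
Qed.
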